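(* Let $F_1,\dots,F_n$ be groups and let $F=F_1\times\dots\times F_n$ act on a set $X$. Let $x\in X$, let $\mathrm{Stab}(x)$ be its stabilizer in $F$, let $S_i=F_i\cap\mathrm{Stab}(x)$, and let $N_i$ be the normalizer of $S_i$ in $F_i$. Then $\mathrm{Stab}(x)\subset N_1\times\dots\times N_n$. In particular, if no $S_i$ is normal in $F_i$, then $\#(F\cdot x)\geq 2^n$. *)

(* Defs.v *)
From mathcomp Require Import all_boot.
Set Implicit Arguments. Unset Strict Implicit. Unset Printing Implicit Defensive.

Record group := Group {
  gcar :> Type;
  gmul : gcar -> gcar -> gcar;
  gone : gcar;
  ginv : gcar -> gcar;
  gmulA : forall a b c, gmul a (gmul b c) = gmul (gmul a b) c;
  gmul1l : forall a, gmul gone a = a;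
  gmul1r : forall a, gmul a gone = a;
  gmulVl : forall a, gmul (ginv a) a = gone;
  gmulVr : forall a, gmul a (ginv a) = gone }.

Section Prod.
Variables (n : nat) (G : 'I_n -> group).

Definition prodG := forall i, G i.
Definition pmul (f g : prodG) : prodG := fun i => gmul (f i) (g i).
Definition pone : prodG := fun i => gone (G i).

Variable X : Type.

Definition is_action (act : prodG -> X -> X) : Prop :=
  (forall x, act pone x = x) /\
  (forall f g x, act f (act g x) = act (pmul f g) x).

Variable act : prodG -> X -> X.

Definition StabF (x : X) (f : prodG) : Prop := act f x = x.

Definition in_factor (i : 'I_n) (f : prodG) : Prop :=
  forall j, j <> i -> f j = gone (G j).

Definition S_ (x : X) (i : 'I_n) (g : G i) : Prop :=
  exists f : prodG, in_factor i f /\ f i = g /\ StabF x f.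

Definition normalizer (H : group) (S : H -> Prop) (g : H) : Prop :=
  forall s, S s <-> S (gmul (gmul g s) (ginv g)).

Definition normal_in (H : group) (S : H -> Prop) : Prop :=
  forall g : H, normalizer S g.

Definition orbitF (x y : X) : Prop := exists f : prodG, y = act f x.

End Prod.

(* Main.v *)
From Stdlib Require Import FunctionalExtensionality Classical ClassicalEpsilon.
Require Import Defs.
From mathcomp Require Import all_boot.

Set Implicit Arguments. Unset Strict Implicit.

Lemma ginvK (H : group) (a : H) : ginv (ginv a) = a.
Proof.
rewrite -[RHS]gmul1l -(gmulVl (ginv a)) -gmulA gmulVl gmul1r //.
Qed.

Lemma ginv1 (H : group) : ginv (gone H) = gone H.
Proof. by rewrite -[LHS]gmul1l gmulVr. Qed.

Definition pinv n (G : 'I_n -> group) (f : prodG G) : prodG G :=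
  fun i => ginv (f i).

Section S.
Variables (n : nat) (G : 'I_n -> group) (X : Type)
    (act : prodG G -> X -> X) (Hact : is_action act) (x : X).

Lemma pmulV (f : prodG G) : pmul (pinv f) f = @pone n G.
Proof. apply: functional_extensionality_dep => i; exact: gmulVl. Qed.

Lemma stab_inv f : StabF act x f -> StabF act x (pinv f).
Proof.
rewrite /StabF => Hf; case: Hact => H1 H2.
by rewrite -{1}Hf H2 pmulV H1.
Qed.

Lemma stab_mul f g : StabF act x f -> StabF act x g -> StabF act x (pmul f g).
Proof.
rewrite /StabF => Hf Hg; case: Hact => H1 H2.
by rewrite -H2 Hg Hf.
Qed.

Lemma S_conj f i s : StabF act x f -> @S_ _ _ _ act x i s ->
  @S_ _ _ _ act x i (gmul (gmul (f i) s) (ginv (f i))).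
Proof.
move=> Hf [h [Hi [<- Hh]]].
exists (pmul (pmul f h) (pinv f)); split; [|split].
- move=> j Hj; rewrite /pmul /pinv (Hi j Hj) gmul1r gmulVr //.
- by [].
- apply: stab_mul; [apply: stab_mul=> // | exact: stab_inv].
Qed.

Lemma part1 f : StabF act x f -> forall i, normalizer (@S_ _ _ _ act x i) (f i).
Proof.
move=> Hf i s; split; first exact: S_conj.
move=> /(S_conj (stab_inv Hf)); rewrite /pinv ginvK.
rewrite !gmulA gmulVl gmul1l -!gmulA gmulVl gmul1r //.
Qed.
End S.

Theorem mainTheorem17 (n : nat) (G : 'I_n -> group) (X : Type)
    (act : prodG G -> X -> X) (Hact : is_action act) (x : X) :
  (forall f : prodG G, @StabF n G X act x f ->
     forall i : 'I_n, normalizer (@S_ n G X act x i) (f i)) /\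
  ((forall i : 'I_n, ~ normal_in (@S_ n G X act x i)) ->
     exists e : 'I_(2 ^ n) -> X,
       injective e /\ forall k, @orbitF n G X act x (e k)).
Proof.
split; first exact: part1.
move=> Hnn.
have Hex : forall i, exists g : G i, ~ normalizer (@S_ _ _ _ act x i) g.
  move=> i; apply: not_all_ex_not; exact: Hnn.
pose g i := proj1_sig (constructive_indefinite_description _ (Hex i)).
have Hg : forall i, ~ normalizer (@S_ _ _ _ act x i) (g i).
  move=> i; exact: (proj2_sig (constructive_indefinite_description _ (Hex i))).
pose B := {ffun 'I_n -> bool}.
have cardB : #|{: B}| = 2 ^ n by rewrite card_ffun card_bool card_ord.
pose fT (b : B) : prodG G := fun i => if b i then g i else gone (G i).
pose e (k : 'I_(2 ^ n)) := act (fT (enum_val (cast_ord (esym cardB) k))) x.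
exists e; split; last by move=> k; exists (fT (enum_val (cast_ord (esym cardB) k))).
move=> k1 k2 Heq.
apply: (cast_ord_inj (eq_n := esym cardB)); apply: enum_val_inj.
move: Heq; rewrite /e.
move: (enum_val _) (enum_val _) => a b Hab.
have [H1 H2] := Hact.
have stab : forall a b : B, act (fT a) x = act (fT b) x ->
    StabF act x (pmul (pinv (fT b)) (fT a)).
  move=> a' b' E; rewrite /StabF -H2 E H2 pmulV H1 //.
apply/ffunP => i; apply/eqP/negPn/negP => Hne.
case Ea: (a i) Hne; case Eb: (b i) => // _.
- apply: (Hg i); move: (@part1 _ _ _ _ Hact _ _ (stab a b (esym Hab)) i).
  by rewrite /pmul /pinv /fT Ea Eb ginv1 gmul1l.
- apply: (Hg i); move: (@part1 _ _ _ _ Hact _ _ (stab b a Hab) i).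
  by rewrite /pmul /pinv /fT Ea Eb ginv1 gmul1l.
Qed.
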